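(* Let $D$ be a digraph with at least two vertices and $s\in V(D)$ such that every vertex of $D$ is reachable from $s$, and let $B_s$ be the diblock of $s$ in $D$. Let $T$ be an out-tree in $D$ (a subgraph of $D$) whose root $r$ lies in $B_s$ and which has $\ell$ leaves. Then $D$ contains an out-tree rooted at $s$ with at least $(\ell-1)/2$ leaves.
   Context: Digraphs are finite and without loops; paths are directed. An out-tree is an oriented tree with exactly one vertex of in-degree zero (its root); its leaves are its vertices of out-degree zero. A vertex $v$ is bi-reachable from $r$ if there are two internally vertex-disjoint directed paths from $r$ to $v$. For a digraph $H$ with at least two vertices and $r\in V(H)$ such that every vertex of $H$ is reachable from $r$, the diblock $B_r$ of $r$ in $H$ is the set of all vertices bi-reachable from $r$, together with $r$ and all out-neighbours of $r$. *)

(* Defs.v *)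
From mathcomp Require Import all_boot.
Set Implicit Arguments. Unset Strict Implicit. Unset Printing Implicit Defensive.

Section Digraphs.
Variable V : finType.
Variable E : rel V.

(* A directed path in D from x, given as the sequence of the vertices after x
   (mathcomp convention), visiting no vertex twice. *)
Definition dpath (x y : V) (p : seq V) : bool :=
  [&& path E x p, last x p == y & uniq (x :: p)].

(* The internal vertices of the path x :: p (all but the two endpoints). *)
Definition interior (p : seq V) : seq V := take (size p).-1 p.

Definition bireachable (r v : V) : Prop :=
  exists p1 p2 : seq V,
    [/\ dpath r v p1, dpath r v p2 &
        [disjoint (interior p1) & (interior p2)]].

Definition in_diblock (r v : V) : Prop :=
  bireachable r v \/ v = r \/ E r v.

Definition undir (A : {set V * V}) : rel V :=
  fun x y => ((x, y) \in A) || ((y, x) \in A).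

(* (S, A) is an out-tree in D rooted at r: a subgraph of D (arcs of A are arcs
   of D with both ends in S), which is an oriented tree (no pair of opposite
   arcs, underlying graph connected with |A| = |S| - 1), and r is the unique
   vertex of S of in-degree zero. *)
Definition is_outtree (S : {set V}) (A : {set V * V}) (r : V) : Prop :=
  (forall a, a \in A -> [&& E a.1 a.2, a.1 \in S & a.2 \in S]) /\
  [/\ forall x y, (x, y) \in A -> (y, x) \notin A,
      r \in S,
      forall x, x \in S -> connect (undir A) r x,
      #|A| + 1 = #|S| &
      forall x, x \in S -> ((forall y, (y, x) \notin A) <-> x = r)].

Definition leaves (S : {set V}) (A : {set V * V}) : {set V} :=
  [set x in S | [forall y, (x, y) \notin A]].

End Digraphs.

(* Main.v *)
Require Import Defs.
From mathcomp Require Import all_boot.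
From mathcomp Require Import zify.

Set Implicit Arguments. Unset Strict Implicit. Unset Printing Implicit Defensive.

Definition arel (V : finType) (A : {set V * V}) : rel V := fun u v => (u, v) \in A.

Definition OT (V : finType) (E : rel V) (S : {set V}) (A : {set V * V}) (r : V) :=
  exists par : V -> V,
  [/\ A = [set (par z, z) | z in S :\ r], r \in S,
      forall z, z \in S :\ r -> (par z \in S) && E (par z) z &
      forall z, z \in S -> connect (arel A) r z].

Lemma memA (V : finType) (par : V -> V) (D : {set V}) u v :
  ((u,v) \in [set (par z, z) | z in D]) = (v \in D) && (u == par v).
Proof.
apply/imsetP/andP => [[z zD [-> ->]] | [vD /eqP ->]]; first by split.
by exists v.
Qed.

Lemma connect_closed (T : finType) (e : rel T) (P : pred T) x y :
  (forall u v, P u -> e u v -> P v) -> P x -> connect e x y -> P y.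
Proof.
move=> cl Px /connectP [p pp ->]; elim: p x Px pp => //= z p IH x Px /andP[exz pz].
exact: IH (cl _ _ Px exz) pz.
Qed.

Lemma OT_outtree (V : finType) (E : rel V) S A r : OT E S A r -> is_outtree E S A r.
Proof.
case=> par [eA rS parP reach]; subst A.
split.
  move=> [u v] /=; rewrite memA => /andP[vD /eqP ->].
  have:= parP _ vD => /andP[pS pE]; rewrite pE pS /=.
  by move: vD; rewrite in_setD1 => /andP[_ ->].
split.
- move=> x y; rewrite !memA => /andP[yD /eqP ex]; apply/negP => /andP[xD /eqP ey].
  have xS : x \in S by move: xD; rewrite !inE => /andP[].
  have := reach x xS.
  have : (r != x) && (r != y).
    by move: xD yD; rewrite !inE => /andP[xr _] /andP[yr _]; rewrite eq_sym xr eq_sym yr.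
  move=> Pr cxy.
  suff : (x != x) && (x != y) by rewrite eqxx.
  apply: (connect_closed (P := fun z => (z != x) && (z != y))) Pr cxy.
  move=> u v /andP[ux uy]; rewrite /arel memA => /andP[_ /eqP eu]; subst u.
  apply/andP; split; apply/eqP => e; subst v.
    by rewrite -ey eqxx in uy.
  by rewrite -ex eqxx in ux.
- exact: rS.
- move=> x xS; apply: (connect_closed (P := connect (undir [set (par z, z) | z in S :\ r]) r)) (reach x xS) => //.
  move=> u v Pu auv; apply: connect_trans Pu (connect1 _).
  by rewrite /undir; apply/orP; left.
- rewrite card_imset; last by move=> a b [].
  by rewrite [RHS](cardsD1 r) rS add1n addn1.
- move=> x xS; split.
    move=> h; apply/eqP; apply/negPn/negP => xr.
    by move: (h (par x)); rewrite memA !inE xr xS eqxx.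
  by move=> -> y; rewrite memA !inE eqxx.
Qed.

Lemma outtree_OT (V : finType) (E : rel V) S A r : is_outtree E S A r -> OT E S A r.
Proof.
case=> arcs [anti rS conn card root].
pose par x := odflt x [pick w | (w, x) \in A].
have parA : forall x, x \in S :\ r -> (par x, x) \in A.
  move=> x; rewrite !inE => /andP[xr xS]; rewrite /par; case: pickP => [w //|none].
  exfalso; move/eqP: xr; apply; apply: (root x xS).1 => y.
  by apply/negP => h; move: (none y); rewrite /= h.
have eA : A = [set (par z, z) | z in S :\ r].
  apply/eqP; rewrite eq_sym eqEcard; apply/andP; split.
    by apply/subsetP => a /imsetP[z zD ->]; exact: parA.
  rewrite card_imset; last by move=> a b [].
  move: card; rewrite (cardsD1 r S) rS add1n addn1 => -[->]; exact: leqnn.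
exists par; split => //.
- move=> x /parA /arcs /and3P[e1 e2 _]; by rewrite e1 e2.
- move=> x xS; have := conn x xS.
  apply: (connect_closed (P := connect (arel A) r)); last exact: connect0.
  move=> u v Pu /orP[auv | avu]; first exact: connect_trans Pu (connect1 auv).
  move: avu; rewrite eA memA => /andP[uD /eqP ->].
  move: Pu => /connectP[p pp up].
  have ur : u != r by move: uD; rewrite !inE => /andP[].
  move: pp up; case/lastP: p => [|q w]; first by move=> _ e; rewrite e eqxx in ur.
  rewrite rcons_path last_rcons => /andP[pq lq] e; subst w.
  move: lq; rewrite /arel eA memA => /andP[_ /eqP <-].
  by apply/connectP; exists q => //; rewrite -eA.
Qed.

Lemma OT_step (V : finType) (E : rel V) (Eirr : irreflexive E) S A x y :
  E x y -> OT E S A y ->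
  exists S' A', OT E S' A' x /\ leaves S A :\ x \subset leaves S' A'.
Proof.
move=> exy [par [eA yS parP reach]].
have xy : x != y by apply/eqP => e; move: exy; rewrite e Eirr.
pose par' z := if z == y then x else par z.
pose A' := [set (par' z, z) | z in (x |: S) :\ x].
have yD : y \in (x |: S) :\ x by rewrite !inE eq_sym xy yS orbT.
exists (x |: S), A'; split.
  exists par'; split => //.
  - by rewrite !inE eqxx.
  - move=> z; rewrite !inE => /andP[zx /orP[zx' | zS]]; first by rewrite zx' in zx.
    rewrite /par'; case: (z =P y) => [->|/eqP zy]; first by rewrite eqxx /= exy.
    have := parP z; rewrite !inE zS zy /= => /(_ isT) /andP[pS pE].
    by rewrite pS pE orbT.
  - move=> z; rewrite !inE => /orP[/eqP -> | zS]; first exact: connect0.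
    apply: (connect_closed (P := connect (arel A') x)) (reach z zS).
      move=> u v Pu; rewrite /arel eA memA => /andP[vD /eqP eu]; subst u.
      case: (v =P x) => [->|/eqP vx]; first exact: connect0.
      apply: connect_trans Pu (connect1 _).
      move: vD; rewrite !inE => /andP[vy vS].
      by rewrite /arel memA !inE vx vS orbT /par' (negbTE vy) eqxx.
    by apply: connect1; rewrite /arel memA yD /par' eqxx eqxx.
apply/subsetP => z; rewrite !inE => /andP[zx /andP[zS /forallP lz]].
rewrite zS orbT /=; apply/forallP => w.
rewrite memA !inE; apply/negP => /andP[/andP[wx wS'] /eqP zp].
move: zp; rewrite /par'; case: eqP => [_ zx'|/eqP wy zp]; first by rewrite zx' eqxx in zx.
have wS : w \in S by move: wS'; rewrite (negbTE wx).
by move: (lz w); rewrite eA memA !inE wS wy zp eqxx.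
Qed.

Lemma OT_path (V : finType) (E : rel V) (Eirr : irreflexive E) :
  forall p x S A, path E x p -> OT E S A (last x p) ->
  exists S' A', OT E S' A' x /\ leaves S A :\: [set z in belast x p] \subset leaves S' A'.
Proof.
elim=> [|y p IH] x S A /=.
  move=> _ h; exists S, A; split => //; exact: subsetDl.
move=> /andP[exy pp] h.
have [S1 [A1 [h1 sub1]]] := IH y S A pp h.
have [S2 [A2 [h2 sub2]]] := OT_step Eirr exy h1.
exists S2, A2; split => //.
apply/subsetP => z /setDP [zl]; rewrite inE /= inE negb_or => /andP[zx zn].
apply: (subsetP sub2); apply/setD1P; split => //.
by apply: (subsetP sub1); apply/setDP; split => //; rewrite inE.
Qed.

Lemma mem_belast_int (V : finType) (x z : V) p :
  z \in belast x p -> (z == x) || (z \in interior p).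
Proof.
case: p => [|y q] //=; rewrite inE => /orP[->//|zb]; apply/orP; right.
rewrite /interior /=.
suff -> : take (size q) (y :: q) = belast y q by [].
by elim: q y {zb} => [|w q IH] y //=; rewrite IH.
Qed.

Theorem lemma4 (V : finType) (E : rel V) (Eirr : irreflexive E)
    (hV : 1 < #|V|) (s : V) (hreach : forall v, connect E s v)
    (T : {set V}) (AT : {set V * V}) (r : V)
    (hT : is_outtree E T AT r) (hr : in_diblock E s r) :
  exists (S : {set V}) (A : {set V * V}),
    is_outtree E S A s /\
    #|leaves T AT| <= 2 * #|leaves S A| + 1.
Proof.
have hOT := outtree_OT hT.
set L := leaves T AT.
have key : forall p, dpath E s r p -> exists S A, is_outtree E S A s /\
    #|L| <= #|leaves S A| + #|L :&: [set z in belast s p]|.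
  move=> p /and3P[pp /eqP lp _]; rewrite -lp in hOT.
  have [S [A [hS sub]]] := OT_path Eirr pp hOT.
  exists S, A; split; first exact: OT_outtree.
  rewrite -(cardsID [set z in belast s p] L) addnC leq_add2r.
  exact: subset_leq_card.
have small : forall p, #|L :&: [set z in belast s p]| <= size p.
  move=> p; apply: leq_trans (subset_leq_card (subsetIr _ _)) _.
  by rewrite cardsE; apply: leq_trans (card_size _) _; rewrite size_belast.
case: hr => [[p1 [p2 [d1 d2 disj]]] | [er | esr]].
- have [S1 [A1 [h1 c1]]] := key p1 d1.
  have [S2 [A2 [h2 c2]]] := key p2 d2.
  have bnd : #|L :&: [set z in belast s p1]| + #|L :&: [set z in belast s p2]| <= #|L| + 1.
    rewrite -cardsUI; apply: leq_add.
      by apply: subset_leq_card; rewrite subUset !subsetIl.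
    rewrite -(cards1 s); apply: subset_leq_card; apply/subsetP => z.
    rewrite !inE => /andP[/andP[_ z1] /andP[_ z2]]; apply/negPn/negP => zs.
    move: (mem_belast_int z1) (mem_belast_int z2); rewrite (negbTE zs) /= => i1 i2.
    by rewrite (disjointFr disj i1) in i2.
  case: (leqP #|L :&: [set z in belast s p1]| #|L :&: [set z in belast s p2]|) => c.
    by exists S1, A1; split => //; lia.
  by exists S2, A2; split => //; lia.
- subst r; have d0 : dpath E s s [::] by rewrite /dpath /= eqxx.
  have [S [A [h c]]] := key [::] d0.
  have sm : #|L :&: [set z in belast s [::]]| <= 0 := small [::].
  exists S, A; split => //; lia.
- have d : dpath E s r [:: r].
    rewrite /dpath /= esr eqxx /= inE andbT.
    by apply/eqP => e; move: esr; rewrite e Eirr.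
  have [S [A [h c]]] := key _ d.
  have sm : #|L :&: [set z in belast s [:: r]]| <= 1 := small [:: r].
  exists S, A; split => //; lia.
Qed.
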